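(* Let $k=\mathbb R$ or $\mathbb C$, let $(E,g)$ be a finite-dimensional inner product vector space over $k$, let $f\in\operatorname{End}_k(E)$, let $\mathcal H_f=\{H_1,\dots,H_n\}$ be $f$-invariant subspaces with $E=H_1\oplus\dots\oplus H_n$, and write $f_i=f|_{H_i}$. Then: (1) $\operatorname{Im} f=\operatorname{Im} f_1\oplus\dots\oplus\operatorname{Im} f_n$; (2) if $\mathcal H_f^\perp=[\operatorname{Im} f_1]_1^\perp\oplus\dots\oplus[\operatorname{Im} f_n]_n^\perp$, then $E=\operatorname{Im} f\oplus\mathcal H_f^\perp$; (3) $\operatorname{Ker} f=\operatorname{Ker} f_1\oplus\dots\oplus\operatorname{Ker} f_n$; (4) if $\widetilde{\mathcal H}_f^\perp=[\operatorname{Ker} f_1]_1^\perp\oplus\dots\oplus[\operatorname{Ker} f_n]_n^\perp$, then $E=\operatorname{Ker} f\oplus\widetilde{\mathcal H}_f^\perp$; (5) $f$ induces an isomorphism between $\widetilde{\mathcal H}_f^\perp$ and $\operatorname{Im} f$, and $f^+_{\mathcal H_f}(e)=(f|_{\widetilde{\mathcal H}_f^\perp})^{-1}(e)$ for $e\in\operatorname{Im} f$ and $f^+_{\mathcal H_f}(e)=0$ for $e\in\mathcal H_f^\perp$.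
   Context: An inner product is linear in the first argument, conjugate-symmetric and positive definite. For a subspace $W\subseteq H_i$, $[W]_i^\perp=\{v\in H_i:g(w,v)=0\ \forall w\in W\}$. For an endomorphism $h$ of a finite-dimensional inner product space $H$, its Moore-Penrose inverse $h^\dagger$ is the linear map equal to $(h|_{[\operatorname{Ker} h]^\perp})^{-1}$ on $\operatorname{Im} h$ and $0$ on $[\operatorname{Im} h]^\perp$ (orthogonal complements taken in $H$). $f^+_{\mathcal H_f}$ is the unique endomorphism of $E$ with $f^+_{\mathcal H_f}|_{H_i}=f_i^\dagger$ for each $i$, where $H_i$ carries the restricted inner product. *)

(* Defs.v *)
From HB Require Import structures.
From mathcomp Require Import all_boot all_order all_algebra.
From mathcomp Require Import reals complex.
Set Implicit Arguments. Unset Strict Implicit. Unset Printing Implicit Defensive.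
Import Order.TTheory GRing.Theory Num.Theory.
Local Open Scope ring_scope.


Definition is_inner_product (k : numFieldType) (cj : k -> k) (E : vectType k)
    (g : E -> E -> k) : Prop :=
  [/\ (forall (a : k) (x x' y : E), g (a *: x + x') y = a * g x y + g x' y),
      (forall x y : E, g y x = cj (g x y)) &
      (forall x : E, x != 0 -> 0 < g x x)].

Definition is_orth_in (k : numFieldType) (E : vectType k) (g : E -> E -> k)
    (Hs W O : {vspace E}) : Prop :=
  forall v : E, v \in O <-> (v \in Hs /\ forall w : E, w \in W -> g w v = 0).

(* The statement of Lemma 3.3 over the scalar field k with conjugation cj.
   f_i = f|_{H_i}; Im f_i = f @: H i; Ker f_i = lker f :&: H i.
   OI i = [Im f_i]_i^perp, OK i = [Ker f_i]_i^perp (complements in H_i),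
   fp = f^+_{H_f}: its restriction to H_i is the Moore-Penrose inverse of f_i,
   i.e. on Im f_i it is the inverse of f_i restricted to [Ker f_i]_i^perp,
   and it vanishes on [Im f_i]_i^perp. *)
Definition Lemma3p3 (k : numFieldType) (cj : k -> k) : Prop :=
  forall (E : vectType k) (g : E -> E -> k), is_inner_product cj g ->
  forall (f : 'End(E)) (n : nat) (H : 'I_n -> {vspace E}),
  (forall i, (f @: H i <= H i)%VS) ->
  directv (\sum_(i < n) H i) -> (\sum_(i < n) H i)%VS = fullv ->
  forall (OI OK : 'I_n -> {vspace E}),
  (forall i, is_orth_in g (H i) (f @: H i) (OI i)) ->
  (forall i, is_orth_in g (H i) (lker f :&: H i) (OK i)) ->
  forall fp : 'End(E),
  (forall i,
     (forall e, e \in (f @: H i)%VS -> fp e \in OK i /\ f (fp e) = e) /\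
     (forall e, e \in OI i -> fp e = 0)) ->
  let Hperp := (\sum_(i < n) OI i)%VS in
  let Htperp := (\sum_(i < n) OK i)%VS in
  [/\
      limg f = (\sum_(i < n) f @: H i)%VS /\ directv (\sum_(i < n) f @: H i),
      (limg f + Hperp)%VS = fullv /\ (limg f :&: Hperp)%VS = 0%VS,
      lker f = (\sum_(i < n) (lker f :&: H i))%VS
        /\ directv (\sum_(i < n) (lker f :&: H i)),
      (lker f + Htperp)%VS = fullv /\ (lker f :&: Htperp)%VS = 0%VS &
      [/\ (f @: Htperp)%VS = limg f,
          (lker f :&: Htperp)%VS = 0%VS,
          (forall e, e \in limg f -> fp e \in Htperp /\ f (fp e) = e) &
          (forall e, e \in Hperp -> fp e = 0)]].

(* Main.v *)
Require Import Defs.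
From HB Require Import structures.
From mathcomp Require Import all_boot all_order all_algebra.
From mathcomp Require Import reals complex.
From mathcomp Require Import zify.
Set Implicit Arguments. Unset Strict Implicit. Unset Printing Implicit Defensive.
Import Order.TTheory GRing.Theory Num.Theory.
Local Open Scope ring_scope.
Section S.
Variables (k : numFieldType) (E : vectType k) (g : E -> E -> k).
Hypothesis glin : forall (a : k) (x x' y : E), g (a *: x + x') y = a * g x y + g x' y.
Variables (m : nat) (b : m.-tuple E).
Definition gvec (v : E) : 'rV[k]_m := \row_j g v (tnth b j).
Fact gvec_lin : linear gvec.
Proof. move=> a x y; apply/rowP => j; rewrite !mxE glin //. Qed.
HB.instance Definition _ := GRing.isLinear.Build k E 'rV[k]_m _ gvec gvec_lin.
Definition gphi : 'Hom(E, 'rV[k]_m) := linfun gvec.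
Lemma gphiE v : gphi v = gvec v. Proof. by rewrite lfunE. Qed.
End S.

Lemma orth_decomp (k : numFieldType) (cj : k -> k) (E : vectType k) (g : E -> E -> k) :
  cj 0 = 0 ->
  (forall (a : k) (x x' y : E), g (a *: x + x') y = a * g x y + g x' y) ->
  (forall x y : E, g y x = cj (g x y)) ->
  (forall x : E, x != 0 -> 0 < g x x) ->
  forall Hs W O : {vspace E}, (W <= Hs)%VS ->
  (forall v : E, v \in O <-> (v \in Hs /\ forall w : E, w \in W -> g w v = 0)) ->
  (W + O = Hs)%VS /\ (W :&: O = 0)%VS.
Proof.
move=> cj0 glin gsym gpos Hs W O sWH hO.
have g0 : forall y, g 0 y = 0.
  move=> y; have := glin 1 0 0 y; rewrite scale1r addr0 mul1r => /eqP.
  by rewrite -subr_eq0 opprD addrA subrr add0r oppr_eq0 => /eqP.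
have gsum : forall (I : Type) (r : seq I) (F : I -> E) y, g (\sum_(i <- r) F i) y = \sum_(i <- r) g (F i) y.
  move=> I r F y; elim: r => [|a r IH]; first by rewrite !big_nil g0.
  by rewrite !big_cons -IH -[F a]scale1r glin mul1r scale1r.
have sOH : (O <= Hs)%VS by apply/subvP => v /hO [].
have cap0 : (W :&: O = 0)%VS.
  apply/eqP; rewrite -subv0; apply/subvP => v /memv_capP [vW /hO [_ h]].
  rewrite memv0; apply/negPn/negP => /gpos; by rewrite h // ltxx.
split => //.
pose m := \dim W; pose b := vbasis W.
pose phi := gphi g b.
have sK : (Hs :&: lker phi <= O)%VS.
  apply/subvP => v /memv_capP [vH]; rewrite memv_ker (gphiE glin) => /eqP h0.
  apply/hO; split => // w wW.
  rewrite (coord_vbasis wW) gsum big1 // => i _.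
  rewrite -[_ *: _]addr0 glin g0 addr0 gsym.
  have := congr1 (fun M : 'rV_m => M 0 i) h0; rewrite !mxE (tnth_nth 0) => ->.
  by rewrite cj0 mulr0.
have dK := limg_ker_dim phi Hs.
have dI : (\dim (phi @: Hs) <= m)%N.
  by apply: leq_trans (dimvS (subvf _)) _; rewrite dimvf (dim_matrix k 1 m) mul1r.
have dS := dimv_sum_cap W O.
rewrite cap0 dimv0 addn0 in dS.
apply/eqP; rewrite eqEdim subv_add sWH sOH /= dS.
have := dimvS sK; rewrite /m in dI; lia.
Qed.

Section Main.
Variables (k : numFieldType) (E : vectType k) (n : nat) (H : 'I_n -> {vspace E}).
Hypothesis hdir : directv (\sum_(i < n) H i).
Hypothesis hfull : (\sum_(i < n) H i)%VS = fullv.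

Lemma indep (us : 'I_n -> E) : (forall i, us i \in H i) -> \sum_(i < n) us i = 0 -> forall i, us i = 0.
Proof. by move=> hu s0 i; apply: (directv_sum_independent hdir) => // j _; apply: hu. Qed.

Lemma sub_dir (A : 'I_n -> {vspace E}) : (forall i, (A i <= H i)%VS) -> directv (\sum_(i < n) A i).
Proof.
move=> sA; apply/directv_sum_independent => us hu s0 i _.
by apply: indep s0 i => j; apply: (subvP (sA j)); apply: hu.
Qed.

Lemma sum_decomp (A O : 'I_n -> {vspace E}) :
  (forall i, A i + O i = H i)%VS -> (forall i, A i :&: O i = 0)%VS ->
  ((\sum_(i < n) A i) + (\sum_(i < n) O i) = fullv)%VS /\
  ((\sum_(i < n) A i) :&: (\sum_(i < n) O i) = 0)%VS.
Proof.
move=> hAO hc; split.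
  by rewrite -big_split /= -hfull; apply: eq_bigr => i _; rewrite hAO.
apply/eqP; rewrite -subv0; apply/subvP => v /memv_capP [/memv_sumP [a ha ->] /memv_sumP [o ho eo]].
have sA i : (A i <= H i)%VS by rewrite -hAO addvSl.
have sO i : (O i <= H i)%VS by rewrite -hAO addvSr.
have e0 : \sum_(i < n) (a i - o i) = 0 by rewrite sumrB eo subrr.
have ai i : a i = o i.
  apply/eqP; rewrite -subr_eq0; apply/eqP; apply: indep e0 i => j.
  by apply: memvB; [apply: (subvP (sA j)); apply: ha | apply: (subvP (sO j)); apply: ho].
rewrite memv0 big1 // => i _; apply/eqP; rewrite -memv0 -(hc i) memv_cap ha //.
by rewrite ai ho.
Qed.
End Main.

Lemma gen (k : numFieldType) (cj : k -> k) : cj 0 = 0 -> Lemma3p3 cj.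
Proof.
move=> cj0 E g [glin gsym gpos] f n H hinv hdir hfull OI OK hOI hOK fp hfp Hperp Htperp.
have od := orth_decomp cj0 glin gsym gpos.
have dOI i := od _ _ _ (hinv i) (hOI i).
have sKH i : (lker f :&: H i <= H i)%VS by rewrite capvSr.
have dOK i := od _ _ _ (sKH i) (hOK i).
have e1 : limg f = (\sum_(i < n) f @: H i)%VS by rewrite -hfull limg_sum.
have e3 : lker f = (\sum_(i < n) (lker f :&: H i))%VS.
  apply/eqP; rewrite eqEsubv; apply/andP; split; last first.
    by apply/subv_sumP => i _; rewrite capvSl.
  apply/subvP => v vK.
  have : v \in (\sum_(i < n) H i)%VS by rewrite hfull memvf.
  move/memv_sumP => [vs hvs ev].
  have f0 : forall i, f (vs i) = 0.
    apply: (indep hdir) => [i|]; first by apply: (subvP (hinv i)); apply: memv_img; apply: hvs.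
    by rewrite -raddf_sum -ev; apply/eqP; rewrite -memv_ker.
  rewrite ev; apply: memv_sumr => i _; rewrite memv_cap hvs // andbT memv_ker f0 //.
have [d2a d2b] := sum_decomp hdir hfull (fun i => (dOI i).1) (fun i => (dOI i).2).
have [d4a d4b] := sum_decomp hdir hfull (fun i => (dOK i).1) (fun i => (dOK i).2).
have h5 : forall e, e \in limg f -> fp e \in Htperp /\ f (fp e) = e.
  move=> e; rewrite e1 => /memv_sumP [vs hvs ->]; rewrite raddf_sum; split.
    apply: memv_sumr => i _; have [h _] := hfp i; exact: (h _ (hvs i isT)).1.
  rewrite raddf_sum; apply: eq_bigr => i _; have [h _] := hfp i; exact: (h _ (hvs i isT)).2.
split.
- by split => //; apply: (sub_dir hdir) => i.
- by rewrite e1.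
- by split => //; apply: (sub_dir hdir) => i.
- by rewrite e3.
split.
- apply/eqP; rewrite eqEsubv limgS ?subvf //=; apply/subvP => e he.
  by have [h1 <-] := h5 e he; apply: memv_img.
- by rewrite e3.
- exact: h5.
- move=> e /memv_sumP [vs hvs ->]; rewrite raddf_sum big1 // => i _.
  by have [_ h] := hfp i; apply: h; apply: hvs.
Qed.

Theorem lemma3p3 (R : realType) :
  Lemma3p3 (fun x : R => x) /\ Lemma3p3 (fun z : R[i] => z^*).
Proof. by split; apply: gen => //; rewrite conjC0. Qed.
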